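(* For each integer $r\ge2$, $$\lim_{\substack{n\in D_r\\ n\to\infty}}\frac{\mathrm{IR}(X_n)}{\alpha(X_n)}=1.$$
   Context: $D_r=\{x\in\mathbb N:\ d\mid x \text{ for some } d\in\{2,3,\dots,r\}\}$. $X_n$ is the graph on $\{0,\dots,n-1\}$ with $a,b$ adjacent iff $\gcd(a-b,n)=1$. $\alpha(G)$ is the independence number; $\mathrm{IR}(G)$ is the maximum size of an irredundant set, where $S$ is irredundant if every $v\in S$ has a vertex in $N[v]\setminus N[S\setminus\{v\}]$ (closed neighborhoods). *)

(* Defs.v *)
From HB Require Import structures.
From mathcomp Require Import all_boot all_order all_algebra.
Set Implicit Arguments. Unset Strict Implicit. Unset Printing Implicit Defensive.
Import Order.TTheory GRing.Theory Num.Theory.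

Definition inD (r x : nat) : Prop := exists d, (2 <= d <= r)%N /\ (d %| x)%N.

Definition ndist (a b : nat) : nat := maxn (a - b) (b - a).

(* unitary Cayley graph X_n on {0,...,n-1}: a ~ b iff gcd(a-b, n) = 1
   (restricted to a != b: a simple graph; for n >= 2 this is automatic) *)
Definition Xadj (n : nat) : rel 'I_n :=
  fun a b => (a != b) && (gcdn (ndist a b) n == 1)%N.

Arguments Xadj n : clear implicits.

Section Graph.
Variables (T : finType) (adj : rel T).

Definition cnbhd (v : T) : {set T} := [set u | (u == v) || adj v u].
Definition cnbhdS (S : {set T}) : {set T} := \bigcup_(x in S) cnbhd x.

Definition independent (S : {set T}) : bool :=
  [forall x in S, forall y in S, ~~ adj x y].

Definition irredundant (S : {set T}) : bool :=
  [forall v in S, exists w, (w \in cnbhd v) && (w \notin cnbhdS (S :\ v))].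

Definition alpha : nat := \max_(S : {set T} | independent S) #|S|.
Definition IR : nat := \max_(S : {set T} | irredundant S) #|S|.
End Graph.

(* Main.v *)
Require Import Defs.
From HB Require Import structures.
From mathcomp Require Import all_boot all_order all_algebra.
From mathcomp Require Import zify.
Import Order.TTheory GRing.Theory Num.Theory.

Lemma ndistC a b : ndist a b = ndist b a.
Proof. by rewrite /ndist maxnC. Qed.

Lemma XadjC n (a b : 'I_n) : Xadj n a b = Xadj n b a.
Proof. by rewrite /Xadj eq_sym ndistC. Qed.

Lemma mod_ndist t a b : (a %% t == b %% t) = (t %| ndist a b).
Proof.
rewrite /ndist; case: (leqP a b) => h.
  have -> : a - b = 0 by apply/eqP; rewrite subn_eq0.
  by rewrite max0n eq_sym eqn_mod_dvd.
have -> : b - a = 0 by apply/eqP; rewrite subn_eq0 ltnW.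
by rewrite maxn0 eqn_mod_dvd // ltnW.
Qed.

Lemma ndist_lt d a b : a %/ d = b %/ d -> 0 < d -> ndist a b < d.
Proof.
move=> e d0; rewrite /ndist.
have ha := divn_eq a d; have hb := divn_eq b d.
have la := ltn_pmod a d0; have lb := ltn_pmod b d0.
rewrite e in ha; lia.
Qed.

Lemma prod_primes_dvd (s : seq nat) n : uniq s -> all (fun p => prime p && (p %| n)) s ->
  \prod_(p <- s) p %| n.
Proof.
elim: s => [|p s IH] /=; first by rewrite big_nil dvd1n.
case/andP=> ps us /andP[/andP[pp pn] al].
rewrite big_cons Gauss_dvd ?pn ?IH //.
rewrite prime_coprime // Euclid_dvd_prod // big_has_cond; apply/hasP=> -[q qs /andP[_ pq]].
have qp : prime q by move/allP: al => /(_ q qs) /andP[].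
by move: pq; rewrite dvdn_prime2 // => /eqP pq; rewrite pq qs in ps.
Qed.

Lemma pow16_aux (s : seq nat) : all prime s ->
  16 ^ (size s) <= 16 ^ (count (fun p => p < 16) s) * \prod_(p <- s) p.
Proof.
elim: s => [|p s IH] /=; first by rewrite big_nil.
case/andP=> pp al; rewrite big_cons expnS.
have p1 := prime_gt1 pp.
have {}IH := IH al.
case: (ltnP p 16) => h /=.
  rewrite add1n expnS; nia.
rewrite add0n; nia.
Qed.

Lemma count_small_primes n : count (fun p => p < 16) (primes n) <= 6.
Proof.
rewrite -size_filter.
have -> : 6 = size [seq p <- iota 0 16 | prime p] by [].
apply: uniq_leq_size; first by rewrite filter_uniq // primes_uniq.
move=> p; rewrite mem_filter mem_primes => /and3P[h pp _].
by rewrite mem_filter pp mem_iota.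
Qed.

Lemma pow16_primes n : 0 < n -> 16 ^ (size (primes n)) <= 16 ^ 6 * n.
Proof.
move=> n0.
have al : all prime (primes n) by apply/allP=> p; rewrite mem_primes => /andP[].
apply: leq_trans (pow16_aux (primes n) al) _; apply: leq_mul.
  by rewrite leq_exp2l // count_small_primes.
apply: dvdn_leq => //; apply: prod_primes_dvd; first exact: primes_uniq.
by apply/allP=> p; rewrite mem_primes => /and3P[-> _ ->].
Qed.

Lemma disjP (T : finType) (A B : {set T}) :
  reflect (forall x, x \in A -> x \in B -> False) [disjoint A & B].
Proof.
rewrite disjoints_subset; apply: (iffP subsetP) => h x xA.
  by move=> xB; have := h x xA; rewrite inE xB.
by rewrite inE; apply/negP => /(h x xA).
Qed.

Section EBound.
Variable n : nat.
Variable S : {set 'I_n}.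
Hypothesis irr : irredundant (Xadj n) S.

Definition Eset : {set 'I_n} := [set v in S | [exists u in S, (u != v) && Xadj n v u]].

Definition W (v : 'I_n) : 'I_n :=
  odflt v [pick w | (w \in cnbhd (Xadj n) v) && (w \notin cnbhdS (Xadj n) (S :\ v))].

Lemma W_spec v : v \in Eset ->
  Xadj n v (W v) /\ forall u, u \in S -> u != v -> (u != W v) && ~~ Xadj n u (W v).
Proof.
rewrite inE => /andP[vS /existsP[u0 /andP[u0S /andP[u0v avu0]]]].
move/forallP: irr => /(_ v); rewrite vS /= => /existsP[w0 hw0].
rewrite /W; case: pickP => [w /andP[wN wS] | /(_ w0)]; last by rewrite hw0.
have key : forall u, u \in S -> u != v -> (u != w) && ~~ Xadj n u w.
  move=> u uS uv.
  have hw : w \notin cnbhd (Xadj n) u.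
    by apply: contra wS => h; apply/bigcupP; exists u => //; rewrite !inE uv.
  by move: hw; rewrite inE negb_or eq_sym.
split=> //.
move: wN; rewrite inE => /orP[/eqP wv|//].
have := key u0 u0S u0v; rewrite wv XadjC avu0 andbF //.
Qed.

Local Notation U := ('I_n.+1 * 'I_n.+1)%type.
Definition key (t : 'I_n.+1) (x : nat) : U := (t, inord (x %% t)).
Definition Pr : {set 'I_n.+1} := [set:: map (@inord n) (primes n)].
Definition Xs (x : nat) : {set U} := [set key t x | t in Pr].
Definition Tst (v : 'I_n) : {set {set U}} :=
  [set R : {set U} | (Xs v \subset R) && [disjoint Xs (W v) & R]].

Lemma Pr_val t : t \in Pr -> val t \in primes n.
Proof.
rewrite inE => /mapP[p pP ->].
have : p <= n by move: pP; rewrite mem_primes => /and3P[_ n0 pn]; apply: dvdn_leq.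
by move=> pn; rewrite /= inordK.
Qed.

Lemma card_Pr : #|Pr| <= size (primes n).
Proof. by rewrite cardsE (leq_trans (card_size _)) // size_map. Qed.

Lemma disj_XY v : v \in Eset -> [disjoint Xs v & Xs (W v)].
Proof.
move=> vE; have [avw _] := W_spec _ vE.
apply/disjP => z /imsetP[t tP ->] /imsetP[t' t'P] /eqP.
rewrite xpair_eqE => /andP[/eqP tt /eqP e]; subst t'.
have tpr := Pr_val _ tP; move: tpr; rewrite mem_primes => /and3P[tp n0 tn].
have t0 := prime_gt0 tp.
have tle : val t < n.+1 := ltn_ord t.
have := congr1 (@nat_of_ord n.+1) e; rewrite !inordK; try by apply: leq_trans (ltn_pmod _ t0) (ltnW tle).
move/eqP; rewrite mod_ndist => tdist.
move: avw; rewrite /Xadj => /andP[_ /eqP g1].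
have : val t %| gcdn (ndist v (W v)) n by rewrite dvdn_gcd tdist tn.
by rewrite g1 dvdn1 => /eqP t1; rewrite t1 in tp.
Qed.

Lemma Tst_lb v : v \in Eset -> 2 ^ (#|{: U}| - 2 * #|Pr|) <= #|Tst v|.
Proof.
move=> vE; have dXY := disj_XY _ vE.
set A := Xs v; set B := Xs (W v); set C := ~: (A :|: B).
have cC : #|{: U}| - 2 * #|Pr| <= #|C|.
  have cc : #|A :|: B| + #|C| = #|{: U}| by rewrite cardsC.
  have hAB : #|A :|: B| <= 2 * #|Pr|.
    rewrite cardsU (leq_trans (leq_subr _ _)) //.
    by rewrite mul2n -addnn leq_add // leq_imset_card.
  lia.
apply: leq_trans (leq_pexp2l _ cC) _ => //.
rewrite -card_powerset -(@card_in_imset _ _ (fun Q => Q :|: A)).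
  apply: subset_leq_card; apply/subsetP => R /imsetP[Q QC ->].
  move: QC; rewrite inE => QC.
  rewrite inE subsetUr /=; apply/disjP => z zB; rewrite inE => /orP[zQ|zA].
    by have := subsetP QC z zQ; rewrite !inE zB orbT.
  by move/disjP: dXY => /(_ z zA zB).
move=> Q1 Q2; rewrite !inE => s1 s2 e; apply/setP=> x; move/setP: (e) => /(_ x); rewrite !inE.
case xA: (x \in A); last by rewrite !orbF.
have n1 : x \notin Q1 by apply/negP=> /(subsetP s1); rewrite !inE xA.
have n2 : x \notin Q2 by apply/negP=> /(subsetP s2); rewrite !inE xA.
by rewrite (negPf n1) (negPf n2).
Qed.

Lemma Tst_disj R u v : u \in Eset -> v \in Eset -> R \in Tst u -> R \in Tst v -> u = v.
Proof.
move=> uE vE; rewrite !inE => /andP[XuR _] /andP[_ dWR].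
apply/eqP/negP => /negP uv.
have uS : u \in S by move: uE; rewrite inE => /andP[].
have [_ hv] := W_spec _ vE; move/andP: (hv u uS uv) => [uw nadj].
set w := W v in uw nadj dWR.
have n0 : 0 < n by case: u {uE XuR uS uv uw nadj} => [[|m]] //; case: n.
set g := gcdn (ndist u w) n.
have g0 : 0 < g by rewrite gcdn_gt0 n0 orbT.
have g1 : g != 1 by move: nadj; rewrite /Xadj uw.
have g2 : 1 < g by case: g g0 g1 => [|[|]].
set t := pdiv g.
have tp : prime t := pdiv_prime g2.
have tg : t %| g := pdiv_dvd g.
have tn : t %| n by apply: dvdn_trans tg (dvdn_gcdr _ _).
have td : t %| ndist u w by apply: dvdn_trans tg (dvdn_gcdl _ _).
have tle : t < n.+1 by rewrite ltnS dvdn_leq.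
set T := (inord t : 'I_n.+1).
have TP : T \in Pr by rewrite inE; apply: map_f; rewrite mem_primes tp n0 tn.
have ek : key T u = key T w.
  rewrite /key /T inordK //; congr (_, inord _); apply/eqP; by rewrite mod_ndist.
have X1 : key T u \in R by apply: (subsetP XuR); apply/imsetP; exists T.
have X2 : key T w \in Xs w by apply/imsetP; exists T.
by move/disjP: dWR => /(_ _ X2); rewrite -ek X1 => /(_ isT).
Qed.

Lemma E_bound : #|Eset| <= 4 ^ #|Pr|.
Proof.
set N := #|{: U}|; set k := #|Pr|.
have H1 : #|Eset| * 2 ^ (N - 2 * k) <= \sum_(v in Eset) #|Tst v|.
  rewrite -sum_nat_const; apply: leq_sum => v vE; exact: Tst_lb.
have H2 : \sum_(v in Eset) #|Tst v| <= 2 ^ N.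
  under eq_bigr => v _ do rewrite -sum1_card big_mkcond /=.
  rewrite exchange_big /=.
  apply: (@leq_trans (\sum_(R : {set U}) 1)).
    apply: leq_sum => R _.
    case: (pickP (fun v => (v \in Eset) && (R \in Tst v))) => [v0 /andP[v0E Rv0] | none].
      rewrite (bigD1 v0) //= Rv0 big1 // => v /andP[vE vv0]; case: ifP => // Rv.
      by rewrite (Tst_disj R v v0 vE v0E Rv Rv0) eqxx in vv0.
    rewrite big1 // => v vE; case: ifP => // Rv.
    by have := none v; rewrite vE Rv.
  rewrite sum1_card -cardsT -powersetT card_powerset cardsT.
  done.
have H3 := leq_trans H1 H2.
rewrite (_ : 4 = 2 ^ 2) // -expnM.
case: (leqP (2 * k) N) => hk.
  move: H3; rewrite -{2}(subnK hk) expnD [_ * 2 ^ (2 * k)]mulnC leq_pmul2r // expn_gt0 //.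
move: H3; rewrite (_ : N - 2 * k = 0) ?muln1 => [h|]; last by apply/eqP; rewrite subn_eq0 ltnW.
apply: leq_trans h _; apply: leq_pexp2l => //; exact: ltnW.
Qed.

End EBound.

Lemma blk_lt n d (x : 'I_n) (d0 : 0 < d) (dn : d %| n) : x %/ d < n %/ d.
Proof. by rewrite ltn_divLR // divnK. Qed.
Lemma blk_lt_old n d (x : 'I_n) : 0 < d -> d %| n -> x %/ d < n %/ d.
Proof. by move=> d0 dn; rewrite ltn_divLR // divnK. Qed.

Lemma upper n d (S : {set 'I_n}) : 0 < d -> d %| n ->
  (forall i, 0 < i < d -> coprime i n) -> irredundant (Xadj n) S ->
  #|S| <= n %/ d + 4 ^ size (primes n).
Proof.
move=> d0 dn dcop irr.
have hE : #|Eset n S| <= 4 ^ size (primes n).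
  apply: leq_trans (E_bound _ _ irr) (leq_pexp2l _ (card_Pr n)) => //.
rewrite -(cardsID (Eset n S) S) addnC leq_add //; last first.
  by apply: leq_trans (subset_leq_card (subsetIr _ _)) hE.
pose f (x : 'I_n) : 'I_(n %/ d) := Ordinal (blk_lt n d x d0 dn).
rewrite -(@card_in_imset _ _ f (S :\: Eset n S)).
  by apply: leq_trans (max_card _) _; rewrite card_ord.
move=> x y; rewrite !inE => /andP[xE xS] /andP[yE yS] /(congr1 val) /= e.
apply/eqP/negP => /negP xy.
have adj : Xadj n x y.
  rewrite /Xadj xy /=.
  have nd := ndist_lt _ _ _ e d0.
  have vxy : nat_of_ord x != nat_of_ord y by [].
  have pos : 0 < ndist x y by rewrite /ndist; lia.
  by apply: dcop; rewrite pos nd.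
rewrite xS /= in xE; move/negP: xE; apply; apply/existsP; exists y.
by rewrite yS eq_sym xy adj.
Qed.

Lemma indep_irr (T : finType) (adj : rel T) (S : {set T}) :
  independent adj S -> irredundant adj S.
Proof.
move=> ind; apply/forallP => v; apply/implyP => vS; apply/existsP; exists v.
rewrite inE eqxx /=; apply/bigcupP => -[u]; rewrite !inE => /andP[uv uS].
move=> /orP[/eqP vu|auv]; first by rewrite vu eqxx in uv.
by move/forallP: ind => /(_ u); rewrite uS /= => /forallP /(_ v); rewrite vS auv.
Qed.

Lemma alpha_le_IR (T : finType) (adj : rel T) : alpha adj <= IR adj.
Proof.
apply/bigmax_leqP => S indS; apply: leq_bigmax_cond; exact: indep_irr.
Qed.

Lemma IR_ub n d : 0 < d -> d %| n -> (forall i, 0 < i < d -> coprime i n) ->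
  IR (Xadj n) <= n %/ d + 4 ^ size (primes n).
Proof. by move=> d0 dn dc; apply/bigmax_leqP => S irr; apply: upper. Qed.

Lemma alpha_lb n d : 1 < d -> d %| n -> n %/ d <= alpha (Xadj n).
Proof.
move=> d1 dn.
have d0 : 0 < d by apply: ltnW.
have mlt (j : 'I_(n %/ d)) : j * d < n.
  by rewrite -{2}(divnK dn) ltn_pmul2r.
pose g (j : 'I_(n %/ d)) : 'I_n := Ordinal (mlt j).
have ginj : injective g.
  move=> j j' /(congr1 val) /= /eqP; rewrite eqn_pmul2r // => /eqP e; exact: val_inj.
have -> : n %/ d = #|[set g j | j in 'I_(n %/ d)]| by rewrite card_imset // card_ord.
apply: leq_bigmax_cond.
apply/forallP => x; apply/implyP => /imsetP[j _ ->]; apply/forallP => y.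
apply/implyP => /imsetP[j' _ ->].
rewrite /Xadj negb_and; apply/orP; right.
have : d %| ndist (j * d) (j' * d) by rewrite -mod_ndist !modnMl.
move=> dd; apply/negP => /eqP g1.
have : d %| gcdn (ndist (j * d) (j' * d)) n by rewrite dvdn_gcd dd dn.
by rewrite g1 dvdn1 => /eqP d1'; rewrite d1' in d1.
Qed.

From mathcomp Require Import ring.
Local Open Scope ring_scope.

Theorem corollary5p6 (r : nat) (hr : (2 <= r)%N) :
  forall eps : rat, 0 < eps ->
  exists N : nat, forall n : nat, (N <= n)%N -> inD r n ->
    `| (IR (Xadj n))%:R / (alpha (Xadj n))%:R - 1 | < eps.
Proof.
move=> eps eps0.
set m := Num.bound (eps^-1).
have hm : eps^-1 < m%:R by apply: archi_boundP; rewrite invr_ge0 ltW.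
exists (16 ^ 6 * r ^ 2 * m ^ 2).+1%N => n hn [d0 [/andP[d02 d0r] d0n]].
have n0 : (0 < n)%N by apply: leq_trans hn.
have d0n' : (d0 <= n)%N := dvdn_leq n0 d0n.
have n1 : (1 < n)%N by apply: leq_trans d0n'.
set d := pdiv n.
have dp : prime d := pdiv_prime n1.
have d1 : (1 < d)%N := prime_gt1 dp.
have dn : (d %| n)%N := pdiv_dvd n.
have dr : (d <= r)%N := leq_trans (pdiv_min_dvd d02 d0n) d0r.
have dcop : forall i, (0 < i < d)%N -> coprime i n.
  move=> i /andP[i0 id].
  case: (ltngtP (gcdn i n) 1) => [g0|g1|e]; last by rewrite /coprime e.
    by move: g0; rewrite ltnNge gcdn_gt0 i0.
  have := pdiv_min_dvd g1 (dvdn_gcdr i n); have := dvdn_leq i0 (dvdn_gcdl i n).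
  rewrite -/d; lia.
set A := alpha (Xadj n); set I := IR (Xadj n); set B := (4 ^ size (primes n))%N.
have hA : (n %/ d <= A)%N := alpha_lb n d d1 dn.
have hAI : (A <= I)%N := alpha_le_IR _ _.
have hIU : (I <= n %/ d + B)%N := IR_ub n d (ltnW d1) dn dcop.
have hB : (B * B <= 16 ^ 6 * n)%N.
  by rewrite -expnMn (_ : (4 * 4 = 16)%N) // pow16_primes.
have hnd : (n <= A * r)%N.
  by rewrite -{1}(divnK dn) leq_mul.
have key : (B * r * m < n)%N.
  have h1 : ((B * r * m) * (B * r * m) < n * n)%N.
    apply: (@leq_ltn_trans (16 ^ 6 * n * (r ^ 2 * m ^ 2))).
      rewrite (_ : (B * r * m) * (B * r * m) = (B * B) * (r ^ 2 * m ^ 2))%N; last by ring.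
      by rewrite leq_mul2r hB orbT.
    rewrite (_ : 16 ^ 6 * n * (r ^ 2 * m ^ 2) = (16 ^ 6 * r ^ 2 * m ^ 2) * n)%N; last by ring.
    by rewrite ltn_pmul2r.
  rewrite ltnNge; apply/negP => h2; move: h1; rewrite ltnNge.
  by rewrite leq_mul.
have hr0 : (0 < r)%N by apply: leq_trans hr.
have Bm : (B * m < A)%N.
  have : (B * m * r < A * r)%N by apply: leq_trans hnd; rewrite mulnAC.
  by rewrite ltn_pmul2r.
have A0 : (0 < A)%N by apply: leq_ltn_trans Bm.
have Ar : (0 : rat) < A%:R by rewrite ltr0n.
have e2 : (I%:R : rat) <= A%:R + B%:R.
  by rewrite -natrD ler_nat (leq_trans hIU) // leq_add2r.
have e3 : (B%:R * m%:R : rat) < A%:R by rewrite -natrM ltr_nat.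
have ee : eps * eps^-1 = 1 by rewrite mulfV // gt_eqF.
have e4 : 1 < eps * m%:R by rewrite -ltr_pdivrMl // mulr1.
have B0 : (0:rat) <= B%:R by rewrite ler0n.
have e5 : (B%:R : rat) < eps * A%:R.
  have h1 : B%:R * 1 <= B%:R * (eps * m%:R) by rewrite ler_wpM2l // ltW.
  have h2 : eps * (B%:R * m%:R) < eps * A%:R by rewrite ltr_pM2l.
  by rewrite mulr1 mulrCA in h1; apply: le_lt_trans h1 h2.
have x1 : 1 <= (I%:R : rat) / A%:R by rewrite ler_pdivlMr // mul1r ler_nat.
rewrite ger0_norm ?subr_ge0 // ltrBlDr ltr_pdivrMr // mulrDl mul1r.
apply: le_lt_trans e2 _; rewrite addrC ltrD2r; exact: e5.
Qed.
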